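(* Let $A\in\mathbb R^{N\times N}$ be a $Z$-matrix and let $p<1$. Then the equation $Ax=x^{p}$ has a solution $x\in\mathbb R^N$ with $x>0$ if and only if $A$ is a non-singular $M$-matrix.
   Context: Inequalities between vectors/matrices are componentwise; for $x\in(0,\infty)^N$, $x^p:=(x_1^p,\dots,x_N^p)^\top$. A matrix $A\in\mathbb R^{N\times N}$ is a $Z$-matrix if $A_{ij}\le 0$ for all $i\neq j$. A $Z$-matrix $A$ is an $M$-matrix if $A=s\,\mathrm{Id}-B$ for some matrix $B\ge 0$ and some $s\in\mathbb R$ with $s\ge\rho(B)$, where $\rho(B)$ is the spectral radius of $B$; it is a non-singular $M$-matrix if in addition it is invertible. *)

(* Defs.v *)
From mathcomp Require Import all_boot all_algebra.
From mathcomp Require Import all_classical all_reals all_analysis.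
From mathcomp Require Import complex.
Set Implicit Arguments. Unset Strict Implicit. Unset Printing Implicit Defensive.
Import GRing.Theory Num.Theory.
Local Open Scope ring_scope.
Local Open Scope classical_set_scope.

Definition Zmatrix (R : realType) (n : nat) (A : 'M[R]_n) : Prop :=
  forall i j : 'I_n, i != j -> A i j <= 0.

Definition nonneg_mx (R : realType) (m n : nat) (B : 'M[R]_(m, n)) : Prop :=
  forall i j, 0 <= B i j.

(* Spectral radius: the largest modulus of a complex eigenvalue, i.e. of a
   complex root of the characteristic polynomial (0 if n = 0). *)
Definition spectral_radius (R : realType) (n : nat) (B : 'M[R]_n) : R :=
  sup [set Normc.normc l | l in
        [set l : R[i] | root (map_poly (real_complex R) (char_poly B)) l]].

Definition Mmatrix (R : realType) (n : nat) (A : 'M[R]_n) : Prop :=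
  Zmatrix A /\
  exists (s : R) (B : 'M[R]_n),
    nonneg_mx B /\ spectral_radius B <= s /\ A = s%:M - B.

Definition nonsingular_Mmatrix (R : realType) (n : nat) (A : 'M[R]_n) : Prop :=
  Mmatrix A /\ A \in unitmx.

Definition vpow (R : realType) (n : nat) (x : 'cV[R]_n) (p : R) : 'cV[R]_n :=
  \col_i (x i 0 `^ p).

(* Main.v *)
Require Import Defs.
From mathcomp Require Import all_boot all_order all_algebra.
From mathcomp Require Import all_classical all_reals all_analysis.
From mathcomp Require Import complex.
From mathcomp Require Import lra.
Set Implicit Arguments. Unset Strict Implicit. Unset Printing Implicit Defensive.
Import Order.TTheory GRing.Theory Num.Theory.
Import numFieldNormedType.Exports.
Local Open Scope classical_set_scope.
Local Open Scope ring_scope.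
Section Cont.
Variable R : realType.

Lemma g_cont (a c p x : R) : 0 < x ->
  (fun t : R => a * t + c - t `^ p) @ x --> (a * x + c - x `^ p).
Proof.
move=> x0.
apply: cvgB; first by apply: cvgD; [apply: cvgMr; exact: cvg_id | exact: cvg_cst].
have H : {for x, continuous (fun t : R => t `^ p)}.
  apply: differentiable_continuous.
  by apply/derivable1_diffP; apply: derivable_powR; rewrite in_itv /= andbT.
exact: H.
Qed.

Lemma g_pos (a c p x : R) : 0 < x -> 0 < a * x + c - x `^ p ->
  exists2 e : R, 0 < e & forall t, `|x - t| < e -> 0 < a * t + c - t `^ p.
Proof.
move=> x0 h; move: (@g_cont a c p x x0) => /cvgr_gt /(_ 0 h).
by move/nbhs_normP => [e e0 H]; exists e => // t xt; apply: H.
Qed.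

Lemma g_neg (a c p x : R) : 0 < x -> a * x + c - x `^ p < 0 ->
  exists2 e : R, 0 < e & forall t, `|x - t| < e -> a * t + c - t `^ p < 0.
Proof.
move=> x0 h; move: (@g_cont a c p x x0) => /cvgr_lt /(_ 0 h).
by move/nbhs_normP => [e e0 H]; exists e => // t xt; apply: H.
Qed.
End Cont.
Section E.
Variable R : realType.

Lemma normc_ge0 (z : R[i]) : 0 <= Normc.normc z.
Proof. by case: z => a b; exact: sqrtr_ge0. Qed.

Lemma normc_real (r : R) : 0 <= r -> Normc.normc (r%:C)%C = r.
Proof. by move=> r0; rewrite /Normc.normc /= expr0n /= addr0 sqrtr_sqr ger0_norm. Qed.

Lemma normc_sum (I : finType) (F : I -> R[i]) :
  Normc.normc (\sum_i F i) <= \sum_i Normc.normc (F i).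
Proof.
apply: (big_ind2 (fun a b => Normc.normc a <= b)).
- by rewrite Normc.normc0.
- by move=> a1 a2 b1 b2 h1 h2; apply: (le_trans (le_normcD _ _)); apply: lerD.
- by [].
Qed.

Lemma eigen_det (F : fieldType) n (M : 'M[F]_n) a :
  eigenvalue M a = (\det (a%:M - M) == 0).
Proof.
apply/eigenvalueP/det0P=> [[v Av_av v_nz] | [v v_nz Av_av]]; exists v => //.
  by rewrite mulmxBr Av_av mul_mx_scalar subrr.
by apply/eqP; rewrite -mul_mx_scalar eq_sym -subr_eq0 -mulmxBr Av_av.
Qed.

Lemma eigen_tr (F : fieldType) n (M : 'M[F]_n) a :
  eigenvalue M^T a = eigenvalue M a.
Proof. by rewrite !eigen_det -det_tr linearB /= tr_scalar_mx trmxK. Qed.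

Lemma spec_bound (N : nat) (B : 'M[R]_N) (x : 'cV[R]_N) (s : R) :
  nonneg_mx B -> (forall i, 0 < x i 0) -> (forall i, (B *m x) i 0 < s * x i 0) ->
  forall l : R[i], root (map_poly (real_complex R) (char_poly B)) l ->
  Normc.normc l < s.
Proof.
move=> B0 xp Bx l; rewrite map_char_poly -eigenvalue_root_char -eigen_tr.
case/eigenvalueP => v Hv vn0.
pose w k := Normc.normc (v 0 k).
have [j0|] := pickP (fun k : 'I_N => true); last first.
  move=> h; case/negP: vn0; apply/eqP/matrixP => a b; have := h b; done.
case: (@arg_maxP _ R _ j0 xpredT (fun k : 'I_N => w k / x k 0) isT) => j _ Hj.
set m := w j / x j 0 in Hj.
have wk : forall k, w k <= m * x k 0.
  move=> k; have H : w k / x k 0 <= m by exact: (Hj k isT).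
  by move: H; rewrite ler_pdivrMr // mulrC.
have m0 : 0 < m.
  rewrite ltNge; apply/negP => m0; case/negP: vn0; apply/eqP/matrixP => a b.
  rewrite (ord1 a) mxE; apply: Normc.eq0_normc; apply/le_anti.
  rewrite normc_ge0 andbT (le_trans (wk b)) //.
  by rewrite mulr_le0_ge0 // ltW.
have wj : w j = m * x j 0 by rewrite /m divfK ?gt_eqF.
have key : Normc.normc l * w j <= m * (B *m x) j 0.
  rewrite /w -Normc.normcM.
  have -> : l * v 0 j = (v *m (map_mx (real_complex R) B)^T) 0 j.
    by rewrite Hv mxE.
  rewrite mxE; apply: (le_trans (normc_sum _)).
  rewrite mxE mulr_sumr; apply: ler_sum => k _.
  rewrite !mxE Normc.normcM normc_real ?B0 // mulrCA [X in X <= _]mulrC; apply: ler_wpM2l; [exact: B0 | exact: wk].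
have : Normc.normc l * w j < s * w j.
  apply: (le_lt_trans key); rewrite wj mulrCA ltr_pM2l //.
by rewrite ltr_pM2r // wj mulr_gt0.
Qed.
Lemma mulmx_cV (N : nat) (A : 'M[R]_N) (y : 'cV[R]_N) i :
  (A *m y) i 0 = \sum_j A i j * y j 0.
Proof. by rewrite mxE. Qed.

Lemma Zmono (N : nat) (A : 'M[R]_N) (x y : 'cV[R]_N) :
  Zmatrix A -> (forall i, 0 < x i 0) -> (forall i, 0 < (A *m x) i 0) ->
  (forall i, 0 <= (A *m y) i 0) -> forall i, 0 <= y i 0.
Proof.
move=> ZA xp Axp Ayp i; rewrite leNgt; apply/negP => yi.
case: (@arg_minP _ R _ i xpredT (fun k : 'I_N => y k 0 / x k 0) isT) => j _ Hj.
set c := y j 0 / x j 0 in Hj.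
have c0 : c < 0.
  apply: (le_lt_trans (Hj i isT)); by rewrite pmulr_llt0 ?invr_gt0.
have yk : forall k, c * x k 0 <= y k 0.
  by move=> k; rewrite -ler_pdivlMr // Hj.
have : (A *m y) j 0 <= c * (A *m x) j 0.
  rewrite !mulmx_cV mulr_sumr; apply: ler_sum => k _.
  have [<-|jk] := eqVneq j k.
    rewrite mulrCA /c divfK ?gt_eqF //.
  by rewrite mulrCA ler_wnM2l // ZA.
by rewrite leNgt => /negP; apply; apply: (lt_le_trans _ (Ayp j)); rewrite nmulr_rlt0.
Qed.

Lemma Zunit (N : nat) (A : 'M[R]_N) (x : 'cV[R]_N) :
  Zmatrix A -> (forall i, 0 < x i 0) -> (forall i, 0 < (A *m x) i 0) ->
  A \in unitmx.
Proof.
move=> ZA xp Axp; rewrite unitmxE unitfE -det_tr; apply/negP => /det0P [v vn0 hv].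
have Ay : A *m v^T = 0 by rewrite -[A]trmxK -trmx_mul hv trmx0.
have y1 := Zmono ZA xp Axp (y := v^T).
have y2 := Zmono ZA xp Axp (y := - v^T).
case/negP: vn0; apply/eqP/matrixP => a b; rewrite (ord1 a) mxE.
apply/le_anti; apply/andP; split.
  have := y2 _ b; rewrite !mxE oppr_ge0; apply.
  by move=> i; rewrite mulmxN Ay !mxE oppr0.
have := y1 _ b; rewrite mxE; apply.
by move=> i; rewrite Ay mxE.
Qed.

Lemma forward (N : nat) (A : 'M[R]_N) (x : 'cV[R]_N) :
  Zmatrix A -> (forall i, 0 < x i 0) -> (forall i, 0 < (A *m x) i 0) ->
  nonsingular_Mmatrix A.
Proof.
move=> ZA xp Axp; split; last exact: Zunit ZA xp Axp.
split => //.
pose s := \sum_i `|A i i|.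
have s0 : 0 <= s by rewrite sumr_ge0.
exists s, (s%:M - A); split; [|split].
- move=> i j; rewrite !mxE; have [<-|ij] := eqVneq i j.
    rewrite mulr1n subr_ge0 (le_trans (ler_norm _)) //.
    by rewrite /s (bigD1 i) //= -[X in X <= _]addr0 lerD2l sumr_ge0.
  by rewrite mulr0n sub0r oppr_ge0 ZA.
- have ub : forall y, [set Normc.normc l | l in [set l : R[i] |
      root (map_poly (real_complex R) (char_poly (s%:M - A))) l]] y -> y <= s.
    move=> y [l hl <-]; apply: ltW; apply: (spec_bound _ xp) hl.
      move=> i j; rewrite !mxE; have [<-|ij] := eqVneq i j.
        rewrite mulr1n subr_ge0 (le_trans (ler_norm _)) //.
        by rewrite /s (bigD1 i) //= -[X in X <= _]addr0 lerD2l sumr_ge0.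
      by rewrite mulr0n sub0r oppr_ge0 ZA.
    move=> i; rewrite mulmxBl mul_scalar_mx !mxE.
    have := Axp i; rewrite mxE; lra.
  rewrite /spectral_radius.
  set S := (X in sup X).
  have [ne|em] := pselect (S !=set0).
    by apply: ge_sup => //.
  have -> : S = set0.
    apply/seteqP; split => // y Sy; exfalso; apply: em; by exists y.
  by rewrite sup0.
- by rewrite opprB addrC subrK.
Qed.
End E.
Section S. Variable R : realType.
Lemma roots_ub (p : {poly R[i]}) : p != 0 ->
  exists M : R, forall l, root p l -> Normc.normc l <= M.
Proof.
move=> p0; have [r hr] := closed_field_poly_normal p.
exists (\sum_(z <- r) Normc.normc z) => l.
rewrite hr rootZ ?lead_coef_eq0 // root_prod_XsubC.
elim: r {hr} => [|a r IH] //=.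
rewrite in_cons big_cons => /orP [/eqP ->|lr].
  rewrite lerDl sumr_ge0 // => z _; case: z => a1 b1; exact: sqrtr_ge0.
rewrite (le_trans (IH lr)) // lerDr; case: a => a1 b1; exact: sqrtr_ge0.
Qed.
End S.
Section C1.
Variable R : realType.

Lemma c1 (N : nat) (A : 'M[R]_N) : nonsingular_Mmatrix A ->
  exists z : 'cV[R]_N, (forall i, 0 < z i 0) /\ (forall i, 0 < (A *m z) i 0).
Proof.
case: N A => [|n] A.
  by move=> _; exists 0; split => i; case: i.
case=> [[ZA [s [B [B0 [rho ->]]]]] Au].
pose U u := exists x : 'cV[R]_n.+1,
  (forall i, 0 < x i 0) /\ (forall i, 0 < ((u%:M - B) *m x) i 0).
have Ent : forall u (x : 'cV[R]_n.+1) i,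
    ((u%:M - B) *m x) i 0 = u * x i 0 - (B *m x) i 0.
  by move=> u x i; rewrite mulmxBl mul_scalar_mx !mxE.
have Bx0 : forall (x : 'cV[R]_n.+1), (forall i, 0 <= x i 0) ->
    forall i, 0 <= (B *m x) i 0.
  by move=> x xp i; rewrite mxE sumr_ge0 // => j _; apply: mulr_ge0.
have ZuB : forall u, Zmatrix (u%:M - B).
  by move=> u i j ij; rewrite !mxE (negbTE ij) mulr0n sub0r oppr_le0.
have Uup : forall u u', U u -> u <= u' -> U u'.
  move=> u u' [x [xp Hx]] uu'; exists x; split => // i; move: (Hx i).
  rewrite !Ent => h; apply: (lt_le_trans h); rewrite lerD2r ler_wpM2r // ltW //.
have Upos : forall u, U u -> 0 < u.
  move=> u [x [xp Hx]]; move: (Hx ord0); rewrite Ent subr_gt0 => h.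
  have := le_lt_trans (Bx0 x (fun i => ltW (xp i)) ord0) h.
  by rewrite pmulr_lgt0.
have Uopen : forall u, U u -> exists2 e, 0 < e & U (u - e).
  move=> u [x [xp Hx]].
  pose S := \sum_i x i 0 / ((u%:M - B) *m x) i 0.
  have S0 : 0 <= S by apply: sumr_ge0 => i _; rewrite divr_ge0 // ltW.
  pose e := (1 + S)^-1.
  have e0 : 0 < e by rewrite invr_gt0; lra.
  exists e => //; exists x; split => // i.
  have hi : x i 0 / ((u%:M - B) *m x) i 0 <= S.
    rewrite /S (bigD1 i) //= lerDl sumr_ge0 // => k _.
    by rewrite divr_ge0 // ltW.
  move: hi; rewrite ler_pdivrMr // => hi.
  have he : e * x i 0 < ((u%:M - B) *m x) i 0.
    rewrite mulrC ltr_pdivrMr; last lra.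
    have := Hx i; nra.
  move: he; rewrite !Ent; lra.
have [Us|nUs] := pselect (U s).
  by case: Us => x [xp Hx]; exists x; split.
exfalso.
have U0 : U (1 + \sum_i \sum_j B i j).
  exists (const_mx 1); split => i; first by rewrite mxE.
  rewrite Ent !mxE mulr1.
  rewrite [X in _ - X](eq_bigr (fun j => B i j)); last by move=> j _; rewrite mxE mulr1.
  have : \sum_j B i j <= \sum_i \sum_j B i j.
    rewrite [X in _ <= X](bigD1 i) //= lerDl sumr_ge0 // => k _.
    by rewrite sumr_ge0.
  lra.
have hne : U !=set0 by exists (1 + \sum_i \sum_j B i j).
have hlb : has_lbound U by exists 0 => u Uu; apply/ltW/Upos.
set ui := inf U.
have sU : forall u, U u -> s < u.
  move=> u Uu; rewrite ltNge; apply/negP => us; apply: nUs; exact: Uup Uu us.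
have sui : s <= ui by apply: lb_le_inf => // u Uu; apply/ltW/sU.
have nUui : ~ U ui.
  move=> Uui; have [e e0 Ue] := Uopen _ Uui.
  have := ge_inf hlb Ue; rewrite -/ui; lra.
have detn0 : \det (ui%:M - B) != 0.
  apply/negP => /eqP d0.
  move: sui; rewrite le_eqVlt => /orP [/eqP eqs | lts].
    by move: Au; rewrite unitmxE unitfE eqs d0 eqxx.
  have ev : eigenvalue B ui by rewrite eigen_det d0 eqxx.
  rewrite eigenvalue_root_char in ev.
  have rc := rmorph_root (real_complex R) ev.
  have pn0 : map_poly (real_complex R) (char_poly B) != 0.
    exact: monic_neq0 (monic_map _ (char_poly_monic B)).
  have [M hM] := roots_ub pn0.
  have : Normc.normc (ui%:C)%C <= spectral_radius B.
    apply: ub_le_sup; last by exists (ui%:C)%C.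
    by exists M => y [l hl <-]; exact: hM.
  have ui0 : 0 <= ui by apply: lb_le_inf => // u Uu; apply/ltW/Upos.
  rewrite normc_real // => h; lra.
pose As := ui%:M - B.
have Asu : As \in unitmx by rewrite unitmxE unitfE.
pose z : 'cV[R]_n.+1 := invmx As *m const_mx 1.
have Az : As *m z = const_mx 1 by rewrite mulKVmx.
clearbody z.
pose S := \sum_k `|z k 0|.
have S0 : 0 <= S by rewrite sumr_ge0.
pose d := (1 + S)^-1.
have d0 : 0 < d by rewrite invr_gt0; lra.
have Ud : U (ui + d).
  have hd : ui < ui + d by lra.
  have [u Uu uud] := inf_lt hne hd.
  exact: Uup Uu (ltW uud).
case: Ud => x' [x'p Hx'].
have zge : forall i, 0 <= z i 0.
  apply: (Zmono (ZuB (ui + d)) x'p Hx') => i.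
  have -> : ((ui + d)%:M - B) *m z = As *m z + d *: z.
    by rewrite /As raddfD /= addrAC mulmxDl mul_scalar_mx.
  rewrite Az !mxE.
  have h1 : d * `|z i 0| <= d * S.
    apply: ler_wpM2l; first exact: ltW.
    by rewrite /S (bigD1 i) //= lerDl sumr_ge0.
  have h2 : d * (- `|z i 0|) <= d * z i 0.
    apply: ler_wpM2l; first exact: ltW.
    by rewrite lerNl -normrN ler_norm.
  have dS : d * (1 + S) = 1 by rewrite mulVf // gt_eqF //; lra.
  lra.
have zgt : forall i, 0 < z i 0.
  move=> i; rewrite lt_neqAle zge andbT; apply/negP => /eqP zi0.
  have h : (As *m z) i 0 = 1 by rewrite Az mxE.
  move: h; rewrite mxE => h.
  have : \sum_k As i k * z k 0 <= 0.
    rewrite (bigD1 i) //= -zi0 mulr0 add0r; apply: sumr_le0 => k ki.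
    by apply: mulr_le0_ge0 => //; apply: ZuB; rewrite eq_sym.
  rewrite h; lra.
apply: nUui; exists z; split => // i.
by rewrite -/As Az mxE ltr01.
Qed.
End C1.
Section C2.
Variable R : realType.

Lemma powR_split (c p : R) : 0 < c -> c = c `^ p * c `^ (1 - p).
Proof.
move=> c0; rewrite -powRD; last by apply/implyP => _; rewrite gt_eqF.
by rewrite addrC subrK powRr1 // ltW.
Qed.

Lemma powR_root (K q : R) : 0 <= K -> 0 < q -> (K `^ q^-1) `^ q = K.
Proof. by move=> K0 q0; rewrite -powRrM mulVf ?gt_eqF // powRr1. Qed.

Lemma row_split (N : nat) (A : 'M[R]_N) (x : 'cV[R]_N) i :
  (A *m x) i 0 = A i i * x i 0 + \sum_(j | j != i) A i j * x j 0.
Proof. by rewrite mxE (bigD1 i). Qed.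

Lemma row_mono (N : nat) (A : 'M[R]_N) (x y : 'cV[R]_N) i :
  Zmatrix A -> (forall j, j != i -> y j 0 <= x j 0) ->
  \sum_(j | j != i) A i j * x j 0 <= \sum_(j | j != i) A i j * y j 0.
Proof.
move=> ZA h; apply: ler_sum => j ji; apply: ler_wnM2l; last exact: h.
by apply: ZA; rewrite eq_sym.
Qed.

Lemma ar1 (u v w : R) : 0 < v -> u <= w * v -> u < (1 + w) * v.
Proof. move=> v0 h; lra. Qed.

Lemma ar2 (a zp Sv : R) : 0 < zp -> 0 <= Sv -> a <= Sv * zp -> (1 + Sv)^-1 * a <= zp.
Proof.
move=> z0 S0 h; rewrite mulrC ler_pdivrMr; last lra.
lra.
Qed.

Lemma ar3 (u c c' w : R) : 0 < u + c - w -> u + c' <= w -> c <= c' -> False.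
Proof. move=> h1 h2 h3; lra. Qed.

Lemma c2 (N : nat) (A : 'M[R]_N) (z : 'cV[R]_N) (p : R) :
  Zmatrix A -> p < 1 -> (forall i, 0 < z i 0) -> (forall i, 0 < (A *m z) i 0) ->
  exists x : 'cV[R]_N, (forall i, 0 < x i 0) /\ A *m x = vpow x p.
Proof.
move=> ZA p1 zp Azp.
pose a (i : 'I_N) : R := (A *m z) i 0.
pose q := 1 - p.
have q0 : 0 < q by rewrite /q subr_gt0.
pose K := 1 + \sum_i z i 0 `^ p / a i.
have K1 : 1 <= K by rewrite lerDl sumr_ge0 // => i _; rewrite divr_ge0 ?powR_ge0 // ltW //; exact: Azp.
have K0 : 0 < K := lt_le_trans ltr01 K1.
pose k := (1 + \sum_i a i / z i 0 `^ p)^-1.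
have kS : 0 <= \sum_i a i / z i 0 `^ p.
  by rewrite sumr_ge0 // => i _; rewrite divr_ge0 ?powR_ge0 // ltW //; exact: Azp.
have k0 : 0 < k by rewrite invr_gt0; lra.
have k1 : k <= 1 by rewrite /k invf_le1; lra.
pose lam := K `^ q^-1.
pose mu := k `^ q^-1.
have lamq : lam `^ q = K by rewrite powR_root //; lra.
have muq : mu `^ q = k by rewrite powR_root // ltW.
have lam0 : 0 < lam by rewrite powR_gt0 //; lra.
have mu0 : 0 < mu by rewrite powR_gt0.
have mulam : mu <= lam.
  have hk : k \is Num.nneg by rewrite nnegrE (ltW k0).
  have hK : K \is Num.nneg by rewrite nnegrE (le_trans ler01 K1).
  have kK : k <= K := le_trans k1 K1.
  have qi0 : 0 <= q^-1 by rewrite invr_ge0 (ltW q0).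
  exact: (ge0_ler_powR qi0 hk hK kK).
have scal : forall c i, (A *m (c *: z)) i 0 = c * a i.
  by move=> c i; rewrite -scalemxAr mxE.
have spow : forall c i, 0 < c -> (c * z i 0) `^ p = c `^ p * z i 0 `^ p.
  by move=> c i c0; rewrite powRM // ltW.
have super : forall i, (lam * z i 0) `^ p < lam * a i.
  move=> i; rewrite spow // {2}(powR_split p lam0) -/q lamq -mulrA.
  rewrite ltr_pM2l ?powR_gt0 //.
  have ai : 0 < a i by exact: Azp.
  have : z i 0 `^ p / a i <= \sum_j z j 0 `^ p / a j.
    by rewrite (bigD1 i) //= lerDl sumr_ge0 // => j _; rewrite divr_ge0 ?powR_ge0 // ltW //; exact: Azp.
  rewrite ler_pdivrMr; last exact: ai.
  move=> h; exact: ar1.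
have sub : forall i, mu * a i <= (mu * z i 0) `^ p.
  move=> i; rewrite spow // {1}(powR_split p mu0) -/q muq -mulrA.
  apply: ler_wpM2l; first exact: powR_ge0.
  have ai : 0 < a i by exact: Azp.
  have zp0 : 0 < z i 0 `^ p by rewrite powR_gt0.
  have : a i / z i 0 `^ p <= \sum_j a j / z j 0 `^ p.
    by rewrite (bigD1 i) //= lerDl sumr_ge0 // => j _; rewrite divr_ge0 ?powR_ge0 // ltW //; exact: Azp.
  rewrite ler_pdivrMr; last exact: zp0.
  move=> h; exact: ar2.
pose S (x : 'cV[R]_N) := (forall i, mu * z i 0 <= x i 0 <= lam * z i 0) /\
  (forall i, (A *m x) i 0 <= x i 0 `^ p).
have Smu : S (mu *: z).
  split => i; last by rewrite scal mxE.
  rewrite mxE lexx /=; apply: ler_wpM2r => //; exact: ltW.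
pose T i := [set t | exists2 x, S x & x i 0 = t].
have Tne : forall i, T i !=set0 by move=> i; exists ((mu *: z) i 0), (mu *: z).
have Tub : forall i, ubound (T i) (lam * z i 0).
  by move=> i _ [x [Sx _] <-]; case/andP: (Sx i).
have Tsup : forall i, has_sup (T i).
  by move=> i; split => //; exists (lam * z i 0).
pose xs : 'cV[R]_N := \col_i sup (T i).
have xsE : forall i, xs i 0 = sup (T i) by move=> i; rewrite mxE.
clearbody xs.
have Sle : forall x, S x -> forall i, x i 0 <= xs i 0.
  by move=> x Sx i; rewrite xsE; apply: sup_upper_bound => //; exists x.
have xsub : forall i, xs i 0 <= lam * z i 0.
  by move=> i; rewrite xsE; apply: ge_sup.
have xslb : forall i, mu * z i 0 <= xs i 0.
  by move=> i; have := Sle _ Smu i; rewrite mxE.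
have xs0 : forall i, 0 < xs i 0.
  by move=> i; apply: lt_le_trans (xslb i); rewrite mulr_gt0.
have xsS : forall i, (A *m xs) i 0 <= xs i 0 `^ p.
  move=> i; rewrite row_split.
  set c := \sum_(j | j != i) _.
  rewrite leNgt; apply/negP => hg.
  have hg' : 0 < A i i * xs i 0 + c - xs i 0 `^ p by rewrite subr_gt0.
  have [e e0 He] := g_pos (xs0 i) hg'.
  have [t Tt te] := sup_adherent e0 (Tsup i).
  case: Tt => x Sx xt.
  have tle : t <= xs i 0 by rewrite -xt; exact: Sle.
  have dt : `|xs i 0 - t| < e.
    rewrite ger0_norm ?subr_ge0 // xsE.
    by move: te; rewrite !ltrBlDr addrC.
  have Hg := He t dt.
  have Sxi : (A *m x) i 0 <= x i 0 `^ p by case: Sx.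
  move: Sxi; rewrite row_split xt => Sxi.
  have cm : c <= \sum_(j | j != i) A i j * x j 0.
    by apply: row_mono => // j _; exact: Sle.
  exact: (ar3 Hg Sxi cm).
have xsol : forall i, (A *m xs) i 0 = xs i 0 `^ p.
  move=> i; apply/eqP; rewrite eq_le xsS /= leNgt; apply/negP => hlt.
  move: (hlt); rewrite row_split; set c := \sum_(j | j != i) _ => hlt'.
  have hg : A i i * xs i 0 + c - xs i 0 `^ p < 0 by rewrite subr_lt0.
  have [e e0 He] := g_neg (xs0 i) hg.
  have xlt : xs i 0 < lam * z i 0.
    rewrite lt_neqAle xsub andbT; apply/negP => /eqP xeq.
    have h1 : lam * a i <= (A *m xs) i 0.
      rewrite -scal row_split [X in _ <= X]row_split mxE -xeq lerD2l.
      by apply: row_mono => // j _; rewrite mxE; exact: xsub.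
    have := xsS i; have := super i; rewrite -xeq => h2 h3.
    by have := lt_le_trans (le_lt_trans h3 h2) h1; rewrite ltxx.
  pose t := Num.min (xs i 0 + e / 2) (lam * z i 0).
  have e2 : 0 < e / 2 by rewrite divr_gt0.
  have t1 : xs i 0 < t by rewrite /t lt_min xlt andbT ltrDl.
  have t2 : t <= lam * z i 0 by rewrite /t ge_min lexx orbT.
  have t4 : t <= xs i 0 + e / 2 by rewrite /t ge_min lexx.
  have t3 : `|xs i 0 - t| < e.
    rewrite distrC ger0_norm; last by rewrite subr_ge0 ltW.
    rewrite ltrBlDr; apply: (le_lt_trans t4); rewrite addrC ltrD2r.
    by rewrite ltr_pdivrMr // ltr_pMr // ltr1n.
  pose x' : 'cV[R]_N := \col_l (if l == i then t else xs l 0).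
  have x'E : forall l, x' l 0 = if l == i then t else xs l 0 by move=> l; rewrite mxE.
  clearbody x'.
  have Sx' : S x'.
    split => l.
    - rewrite x'E; case: eqP => [->|_]; last by rewrite xslb xsub.
      by rewrite (le_trans (xslb i) (ltW t1)) t2.
    - rewrite x'E; case: (eqVneq l i) => [->|ki].
      + rewrite row_split x'E eqxx.
        have -> : \sum_(j | j != i) A i j * x' j 0 = c.
          by apply: eq_bigr => j ji; rewrite x'E (negbTE ji).
        by have := He t t3; rewrite subr_lt0 => /ltW.
      + apply: le_trans (xsS l); rewrite !mxE; apply: ler_sum => j _.
        rewrite x'E; case: eqP => [->|_] //; apply: ler_wnM2l; last exact: ltW.
        exact: ZA.
  have := Sle _ Sx' i; rewrite x'E eqxx => tle.
  by move: t1; rewrite ltNge tle.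
exists xs; split => //; apply/matrixP => l j.
by rewrite (ord1 j) xsol /vpow mxE.
Qed.
End C2.

Local Close Scope classical_set_scope.

Theorem theorem3p4 (R : realType) (N : nat) (A : 'M[R]_N) (p : R) :
  Zmatrix A -> p < 1 ->
  ((exists x : 'cV[R]_N, (forall i, 0 < x i 0) /\ A *m x = vpow x p)
   <-> nonsingular_Mmatrix A).
Proof.
move=> ZA p1; split.
  case=> x [xp hx]; apply: (forward ZA xp) => i.
  by rewrite hx mxE powR_gt0.
move=> /c1 [z [zp Azp]]; exact: c2 ZA p1 zp Azp.
Qed.
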